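(* Let $(\Gamma,M)$ be an E-GCM graph on $n\ge3$ nodes whose underlying graph $\Gamma$ is a loop (the nodes can be numbered $\gamma_1,\dots,\gamma_n$ so that each $\gamma_i$ is adjacent exactly to $\gamma_{i-1}$ and $\gamma_{i+1}$, indices mod $n$), and such that $M_{ij}M_{ji}=1$ for every pair of adjacent nodes. Then $(\Gamma,M)$ is not admissible.
   Context: E-GCM $M=(M_{ij})_{i,j\in I_n}$: real, $M_{ii}=2$, $M_{ij}\le0$ ($i\ne j$), $M_{ij}\ne0\iff M_{ji}\ne0$, nonzero $M_{ij}M_{ji}$ either $\ge4$ or $=4\cos^2(\pi/m)$ with $m\ge3$ integer; E-GCM graph: nodes $\gamma_i$, adjacent iff $M_{ij}\ne0$. Positions $\lambda\in\mathbb{R}^n$; firing $\gamma_i$ (allowed iff $\lambda_i>0$) replaces $\lambda_j$ by $\lambda_j-M_{ij}\lambda_i$. Numbers game: fire nodes with positive population while any exist; a game sequence is convergent if finite. A connected E-GCM graph is admissible if some nonzero position with all $\lambda_i\ge0$ has a convergent game sequence. *)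

(* Defs.v *)
From Stdlib Require Import Reals Lra Lia List.
Open Scope R_scope.

(* An n x n real matrix, entries M i j for i j < n (other values irrelevant). *)

Definition is_EGCM (n : nat) (M : nat -> nat -> R) : Prop :=
  (forall i, (i < n)%nat -> M i i = 2) /\
  (forall i j, (i < n)%nat -> (j < n)%nat -> i <> j -> M i j <= 0) /\
  (forall i j, (i < n)%nat -> (j < n)%nat -> (M i j <> 0 <-> M j i <> 0)) /\
  (forall i j, (i < n)%nat -> (j < n)%nat -> i <> j -> M i j * M j i <> 0 ->
      M i j * M j i >= 4 \/
      exists m : nat, (3 <= m)%nat /\ M i j * M j i = 4 * (cos (PI / INR m))^2).

Definition adjacent (M : nat -> nat -> R) (i j : nat) : Prop :=
  i <> j /\ M i j <> 0.

Definition is_loop (n : nat) (M : nat -> nat -> R) : Prop :=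
  exists sigma : nat -> nat,
    (forall i, (i < n)%nat -> (sigma i < n)%nat) /\
    (forall i j, (i < n)%nat -> (j < n)%nat -> sigma i = sigma j -> i = j) /\
    (forall i j, (i < n)%nat -> (j < n)%nat ->
       (adjacent M (sigma i) (sigma j) <->
        (j = Nat.modulo (S i) n \/ i = Nat.modulo (S j) n))).

Definition fire (M : nat -> nat -> R) (lam : nat -> R) (i : nat) : nat -> R :=
  fun j => lam j - M i j * lam i.

Fixpoint legal (n : nat) (M : nat -> nat -> R) (lam : nat -> R) (s : list nat) : Prop :=
  match s with
  | nil => True
  | i :: s' => (i < n)%nat /\ 0 < lam i /\ legal n M (fire M lam i) s'
  end.

Fixpoint play (M : nat -> nat -> R) (lam : nat -> R) (s : list nat) : nat -> R :=
  match s with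
  | nil => lam
  | i :: s' => play M (fire M lam i) s'
  end.

Definition terminal (n : nat) (lam : nat -> R) : Prop :=
  forall i, (i < n)%nat -> lam i <= 0.

Definition has_convergent_game (n : nat) (M : nat -> nat -> R) (lam : nat -> R) : Prop :=
  exists s : list nat, legal n M lam s /\ terminal n (play M lam s).

Definition admissible (n : nat) (M : nat -> nat -> R) : Prop :=
  exists lam : nat -> R,
    (forall i, (i < n)%nat -> 0 <= lam i) /\
    (exists i, (i < n)%nat /\ lam i <> 0) /\
    has_convergent_game n M lam.

(* Main.v *)
Require Import Defs.
From Stdlib Require Import Reals.
From Stdlib Require Import Lra Lia List.
Open Scope R_scope.

Fixpoint sm (f : nat -> R) (n : nat) : R :=
  match n with O => 0 | S m => sm f m + f m end.

Lemma sm_ext f g n : (forall k, (k < n)%nat -> f k = g k) -> sm f n = sm g n.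
Proof. induction n; simpl; intros H; auto. rewrite IHn by (intros; apply H; lia). rewrite H by lia; auto. Qed.

Lemma sm_plus f g n : sm (fun k => f k + g k) n = sm f n + sm g n.
Proof. induction n; simpl; [lra|]. rewrite IHn; lra. Qed.

Lemma sm_scal c f n : sm (fun k => c * f k) n = c * sm f n.
Proof. induction n; simpl; [lra|]. rewrite IHn; lra. Qed.

Lemma sm_zero f n : (forall k, (k < n)%nat -> f k = 0) -> sm f n = 0.
Proof. induction n; simpl; intros H; auto. rewrite IHn by (intros; apply H; lia). rewrite H by lia; lra. Qed.

Lemma sm_delta a v n : (a < n)%nat -> sm (fun k => if Nat.eqb k a then v else 0) n = v.
Proof.
  induction n; intros Ha; [lia|]. simpl.
  destruct (Nat.eq_dec a n) as [->|Hne].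
  - rewrite Nat.eqb_refl. rewrite sm_zero; [lra|].
    intros k Hk. destruct (Nat.eqb_spec k n); [lia|auto].
  - rewrite IHn by lia. destruct (Nat.eqb_spec n a); [lia|lra].
Qed.

Lemma sm_nonpos f n : (forall k, (k < n)%nat -> f k <= 0) -> sm f n <= 0.
Proof. induction n; simpl; intros H; [lra|]. assert (H1 := H n). assert (sm f n <= 0) by (apply IHn; intros; apply H; lia). specialize (H1 ltac:(lia)). lra. Qed.

Lemma sm_nonneg f n : (forall k, (k < n)%nat -> 0 <= f k) -> 0 <= sm f n.
Proof. induction n; simpl; intros H; [lra|]. assert (H1 := H n). assert (0 <= sm f n) by (apply IHn; intros; apply H; lia). specialize (H1 ltac:(lia)). lra. Qed.

Lemma sm_pos f n k0 : (forall k, (k < n)%nat -> 0 <= f k) -> (k0 < n)%nat -> 0 < f k0 -> 0 < sm f n.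
Proof.
  induction n; simpl; intros H Hk Hp; [lia|].
  destruct (Nat.eq_dec k0 n) as [->|].
  - assert (0 <= sm f n) by (apply sm_nonneg; intros; apply H; lia). lra.
  - assert (0 < sm f n) by (apply IHn; [intros; apply H; lia | lia | auto]).
    assert (0 <= f n) by (apply H; lia). lra.
Qed.

Lemma exp_pow x m : exp x ^ m = exp (INR m * x).
Proof.
  induction m; simpl. { rewrite Rmult_0_l, exp_0; auto. }
  rewrite IHm, <- exp_plus. f_equal. destruct m; simpl; lra.
Qed.

Lemma sk_formula n k : (k < n)%nat -> Nat.modulo (S k) n = if Nat.eqb (S k) n then 0%nat else S k.
Proof.
  intros Hk. destruct (Nat.eqb_spec (S k) n) as [E|E].
  - rewrite E. apply Nat.mod_same. lia.
  - apply Nat.mod_small. lia.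
Qed.

Lemma surj n (sigma : nat -> nat) :
  (forall i, (i < n)%nat -> (sigma i < n)%nat) ->
  (forall i j, (i < n)%nat -> (j < n)%nat -> sigma i = sigma j -> i = j) ->
  forall i, (i < n)%nat -> exists k, (k < n)%nat /\ sigma k = i.
Proof.
  intros H1 H2 i Hi.
  assert (Hinc : incl (seq 0 n) (map sigma (seq 0 n))).
  { apply NoDup_length_incl.
    - apply NoDup_map_NoDup_ForallPairs; [|apply seq_NoDup].
      intros a b Ha Hb. apply in_seq in Ha, Hb. apply H2; lia.
    - rewrite length_map; lia.
    - intros x Hx. apply in_map_iff in Hx. destruct Hx as [k [<- Hk]].
      apply in_seq in Hk. apply in_seq. specialize (H1 k). lia. }
  assert (In i (map sigma (seq 0 n))) by (apply Hinc, in_seq; lia).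
  apply in_map_iff in H. destruct H as [k [Hk Hk']]. apply in_seq in Hk'.
  exists k; split; [lia|auto].
Qed.

Theorem lemma4p14 (n : nat) (M : nat -> nat -> R) :
  (3 <= n)%nat ->
  is_EGCM n M ->
  is_loop n M ->
  (forall i j, (i < n)%nat -> (j < n)%nat -> adjacent M i j -> M i j * M j i = 1) ->
  ~ admissible n M.
Proof.
  intros Hn [Hdiag [Hneg _]] [sigma [Hs1 [Hs2 Hs3]]] Hprod [lam [Hlam0 [[i0 [Hi0 Hi0']] [s [Hleg Hterm]]]]].
  set (sk := fun k => Nat.modulo (S k) n).
  assert (Hsk : forall k, (k < n)%nat -> sk k = if Nat.eqb (S k) n then 0%nat else S k)
    by (intros; apply sk_formula; auto).
  assert (Hsklt : forall k, (k < n)%nat -> (sk k < n)%nat).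
  { intros k Hk. rewrite Hsk by auto. destruct (Nat.eqb_spec (S k) n); lia. }
  set (a := fun k => - M (sigma k) (sigma (sk k))).
  assert (Hadj : forall k, (k < n)%nat -> adjacent M (sigma k) (sigma (sk k))).
  { intros k Hk. apply Hs3; auto. }
  assert (Hapos : forall k, (k < n)%nat -> 0 < a k).
  { intros k Hk. destruct (Hadj k Hk) as [Hne Hnz]. unfold a.
    assert (M (sigma k) (sigma (sk k)) <= 0) by (apply Hneg; auto). lra. }
  set (pr := fix pr m := match m with O => 1 | S m' => pr m' * a m' end).
  assert (Hprpos : forall m, (m <= n)%nat -> 0 < pr m).
  { induction m; intros Hm; simpl; [lra|]. apply Rmult_lt_0_compat; [apply IHm; lia| apply Hapos; lia]. }
  set (c := exp (ln (pr n) / INR n)).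
  assert (Hc : 0 < c) by apply exp_pos.
  assert (Hcn : c ^ n = pr n).
  { unfold c. rewrite exp_pow. replace (INR n * (ln (pr n) / INR n)) with (ln (pr n)).
    - apply exp_ln, Hprpos; lia.
    - field. apply not_0_INR. lia. }
  set (y := fun k => c ^ k / pr k).
  assert (Hypos : forall k, (k <= n)%nat -> 0 < y k).
  { intros k Hk. unfold y. apply Rdiv_lt_0_compat; [apply pow_lt; auto | apply Hprpos; auto]. }
  assert (Hyrel : forall k, (k < n)%nat -> y (sk k) * a k = c * y k).
  { intros k Hk. assert (0 < pr k) by (apply Hprpos; lia). assert (0 < a k) by auto.
    rewrite Hsk by auto. destruct (Nat.eqb_spec (S k) n) as [E|E].
    - unfold y. simpl pr. simpl pow.
      assert (c ^ S k = pr (S k)) by (rewrite E; auto).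
      simpl in H1. replace (c * (c ^ k / pr k)) with ((c * c ^ k) / pr k) by (field; lra).
      rewrite H1. simpl. field. lra.
    - unfold y. simpl. field. split; lra. }
  set (Phi := fun l : nat -> R => sm (fun k => y k * l (sigma k)) n).
  assert (HT : forall k0, (k0 < n)%nat -> sm (fun k => y k * M (sigma k0) (sigma k)) n <= 0).
  { intros k0 Hk0.
    set (p := if Nat.eqb k0 0 then (n - 1)%nat else (k0 - 1)%nat).
    assert (Hp : (p < n)%nat) by (unfold p; destruct (Nat.eqb_spec k0 0); lia).
    assert (Hskp : sk p = k0).
    { rewrite Hsk by auto. unfold p. destruct (Nat.eqb_spec k0 0) as [E|E];
      [destruct (Nat.eqb_spec (S (n-1)) n) | destruct (Nat.eqb_spec (S (k0-1)) n)]; lia. }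
    set (q := sk k0).
    assert (Hq : (q < n)%nat) by (apply Hsklt; auto).
    assert (Hqk : q <> k0) by (unfold q; rewrite Hsk by auto; destruct (Nat.eqb_spec (S k0) n); lia).
    assert (Hpk : p <> k0) by (unfold p; destruct (Nat.eqb_spec k0 0); lia).
    assert (Hpq : p <> q).
    { unfold q, p. rewrite Hsk by auto. destruct (Nat.eqb_spec (S k0) n); destruct (Nat.eqb_spec k0 0); lia. }
    rewrite (sm_ext _ (fun k => (if Nat.eqb k k0 then y k0 * M (sigma k0) (sigma k0) else 0)
        + (if Nat.eqb k q then y q * M (sigma k0) (sigma q) else 0)
        + (if Nat.eqb k p then y p * M (sigma k0) (sigma p) else 0))).
    2: { intros k Hk.
         destruct (Nat.eqb_spec k k0) as [->|E1]; [destruct (Nat.eqb_spec k0 q); destruct (Nat.eqb_spec k0 p); try lia; lra|].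
         destruct (Nat.eqb_spec k q) as [->|E2]; [destruct (Nat.eqb_spec q p); try lia; lra|].
         destruct (Nat.eqb_spec k p) as [->|E3]; [lra|].
         destruct (Req_dec (M (sigma k0) (sigma k)) 0) as [Z|Z]; [rewrite Z; lra|].
         exfalso.
         assert (Hne : sigma k0 <> sigma k) by (intro Hs; apply E1; symmetry; apply Hs2; auto).
         destruct (proj1 (Hs3 k0 k Hk0 Hk) (conj Hne Z)) as [H|H].
         - apply E2. exact H.
         - apply E3. fold (sk k) in H. rewrite <- Hskp in H.
           rewrite !Hsk in H by auto.
           destruct (Nat.eqb_spec (S k) n); destruct (Nat.eqb_spec (S p) n); lia. }
    rewrite !sm_plus, !sm_delta by auto.
    rewrite Hdiag by auto.
    assert (E1 : y q * M (sigma k0) (sigma q) = - c * y k0).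
    { pose proof (Hyrel k0 Hk0). unfold a in H. fold q in H. lra. }
    assert (Hm : M (sigma k0) (sigma p) * M (sigma p) (sigma k0) = 1).
    { apply Hprod; [auto|auto|]. apply (proj2 (Hs3 k0 p Hk0 Hp)). right. symmetry. exact Hskp. }
    assert (E2 : M (sigma p) (sigma k0) = - a p) by (unfold a; rewrite Hskp; lra).
    pose proof (Hyrel p Hp) as Hr. rewrite Hskp in Hr.
    assert (Hap : 0 < a p) by auto. assert (Hyk0 : 0 < y k0) by (apply Hypos; lia).
    assert (E3 : y p * M (sigma k0) (sigma p) = - y k0 / c).
    { rewrite E2 in Hm. assert (HM : M (sigma k0) (sigma p) = - / a p).
      { apply (Rmult_eq_reg_r (a p)); [|lra]. replace (- / a p * a p) with (-1) by (field; lra). nra. }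
      rewrite HM. apply (Rmult_eq_reg_r (c * a p)); [|nra].
      replace (y p * - / a p * (c * a p)) with (- (c * y p)) by (field; lra).
      replace (- y k0 / c * (c * a p)) with (- (y k0 * a p)) by (field; lra). lra. }
    rewrite E1, E3.
    assert (Heq : y k0 * 2 + - c * y k0 + - y k0 / c = - (y k0 * ((c - 1) * (c - 1)) * / c)) by (field; lra).
    rewrite Heq.
    assert (Hnn : 0 <= y k0 * ((c - 1) * (c - 1)) * / c).
    { apply Rmult_le_pos; [apply Rmult_le_pos; [left; exact Hyk0| apply Rle_0_sqr] | left; apply Rinv_0_lt_compat; exact Hc]. }
    lra. }
  assert (Hfire : forall l i, (i < n)%nat -> 0 < l i -> Phi l <= Phi (fire M l i)).
  { intros l i Hi Hli. destruct (surj n sigma Hs1 Hs2 i Hi) as [k0 [Hk0 <-]].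
    unfold Phi, fire.
    rewrite (sm_ext (fun k => y k * (l (sigma k) - M (sigma k0) (sigma k) * l (sigma k0))) (fun k => y k * l (sigma k) + (- l (sigma k0)) * (y k * M (sigma k0) (sigma k))))
      by (intros; ring).
    rewrite sm_plus, sm_scal. pose proof (HT k0 Hk0). nra. }
  assert (Hplay : forall s l, legal n M l s -> Phi l <= Phi (play M l s)).
  { induction s0 as [|i s' IH]; intros l Hl; simpl; [lra|].
    destruct Hl as [Hi [Hli Hl']]. pose proof (Hfire l i Hi Hli). pose proof (IH _ Hl'). lra. }
  pose proof (Hplay s lam Hleg) as H1.
  assert (Hend : Phi (play M lam s) <= 0).
  { unfold Phi. apply sm_nonpos. intros k Hk.
    assert (play M lam s (sigma k) <= 0) by (apply Hterm; auto).
    assert (0 < y k) by (apply Hypos; lia). nra. }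
  assert (Hstart : 0 < Phi lam).
  { destruct (surj n sigma Hs1 Hs2 i0 Hi0) as [k0 [Hk0 Hk0']].
    unfold Phi. apply (sm_pos _ _ k0); auto.
    - intros k Hk. assert (0 <= lam (sigma k)) by auto. assert (0 < y k) by (apply Hypos; lia). nra.
    - rewrite Hk0'. assert (0 <= lam i0) by auto. assert (0 < y k0) by (apply Hypos; lia). nra. }
  lra.
Qed.
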